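(* Let $A>0$ and let $k_{\min},k_{\max},\mu_{\min},\mu_{\max}\in C^0([0,A];\mathbb{R}_{\ge 0})$ be Lipschitz functions such that $$k_{\min}(a)\le k_{\max}(a),\qquad \mu_{\min}(a)\le \mu_{\max}(a)\qquad \forall a\in[0,A],$$ and $$\int_0^A k_{\min}(a)\,e^{-\int_0^a \mu_{\max}(s)\,ds}\,da>1 .$$ Let $\zeta_{\min}$ and $\zeta_{\max}$ be the unique solutions of $$\int_0^A k_{\min}(a)e^{-\zeta_{\min} a-\int_0^a \mu_{\max}(s)\,ds}\,da=1,\qquad \int_0^A k_{\max}(a)e^{-\zeta_{\max} a-\int_0^a \mu_{\min}(s)\,ds}\,da=1,$$ so that $\zeta_{\min}\le\zeta_{\max}$. Let $G>0$ be large enough that $\|f\|_\infty+\sup_{a\neq s}\frac{|f(a)-f(s)|}{|a-s|}\le G$ for each $f\in\{k_{\min},k_{\max},\mu_{\min},\mu_{\max}\}$. Define $$H_G:=\Big\{f\in C^0([0,A];\mathbb{R}_{\ge0}):\ \|f\|_\infty+\sup_{a,s\in[0,A],\,a\ne s}\tfrac{|f(a)-f(s)|}{|a-s|}\le G\Big\},$$ $$S:=\{(k,\mu)\in H_G^2:\ k_{\min}(a)\le k(a)\le k_{\max}(a),\ \mu_{\min}(a)\le\mu(a)\le\mu_{\max}(a)\ \forall a\in[0,A]\}.$$ For $(k,\mu)\in S$ let $P(k,\mu)=\zeta$, where $\zeta>0$ is the unique solution of $\int_0^A k(a)e^{-\zeta a-\int_0^a\mu(s)\,ds}\,da=1$.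 Then $P$ maps $S$ into $[\zeta_{\min},\zeta_{\max}]$ and is Lipschitz continuous with respect to the sup norm: for all $(k,\mu),(\tilde k,\tilde\mu)\in S$, $$|P(\tilde k,\tilde\mu)-P(k,\mu)|\le L\,\|\tilde k-k\|_\infty+L\,\|k_{\max}\|_\infty\,A\,\|\tilde\mu-\mu\|_\infty,$$ where, with $I(a):=e^{-\int_0^a\mu_{\max}(s)\,ds}$, $$L=\frac{A\,\bigl(2A\|k_{\max}\|_\infty\bigr)^{2A\|k_{\max}\|_\infty-1}}{\left(\int_0^A a\,k_{\min}(a)I(a)\,da\right)\ln\!\left(\int_0^A k_{\min}(a)I(a)\,da\right)}.$$
   Context: $\|f\|_\infty=\sup_{a\in[0,A]}|f(a)|$. $C^0([0,A];\mathbb{R}_{\ge0})$ denotes continuous nonnegative functions on $[0,A]$. $P$ is the Lotka–Sharpe map assigning to a fertility profile $k$ and mortality profile $\mu$ the intrinsic growth rate $\zeta$. *)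

(* Defs.v *)
From Stdlib Require Import Reals.
From Coquelicot Require Import Coquelicot.
Open Scope R_scope.

Definition supnorm (A : R) (f : R -> R) : R :=
  real (Lub_Rbar (fun y => exists a, 0 <= a <= A /\ y = Rabs (f a))).

Definition lipconst (A : R) (f : R -> R) : R :=
  real (Lub_Rbar (fun y => exists a s, 0 <= a <= A /\ 0 <= s <= A /\ a <> s /\
                          y = Rabs (f a - f s) / Rabs (a - s))).

Definition cont_on (A : R) (f : R -> R) : Prop :=
  forall a, 0 <= a <= A ->
    filterlim f (within (fun x => 0 <= x <= A) (locally a)) (locally (f a)).

Definition nonneg_on (A : R) (f : R -> R) : Prop :=
  forall a, 0 <= a <= A -> 0 <= f a.

Definition lipschitz_on (A : R) (f : R -> R) : Prop :=
  exists K, forall a s, 0 <= a <= A -> 0 <= s <= A -> Rabs (f a - f s) <= K * Rabs (a - s).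

Definition C0nonneg_lip (A : R) (f : R -> R) : Prop :=
  cont_on A f /\ nonneg_on A f /\ lipschitz_on A f.

Definition H_G (A G : R) (f : R -> R) : Prop :=
  C0nonneg_lip A f /\ supnorm A f + lipconst A f <= G.

Definition LS_eq (A : R) (k mu : R -> R) (z : R) : Prop :=
  RInt (fun a => k a * exp (- z * a - RInt mu 0 a)) 0 A = 1.

Definition inS (A G : R) (kmin kmax mumin mumax k mu : R -> R) : Prop :=
  H_G A G k /\ H_G A G mu /\
  (forall a, 0 <= a <= A -> kmin a <= k a <= kmax a) /\
  (forall a, 0 <= a <= A -> mumin a <= mu a <= mumax a).

Definition Lconst (A : R) (kmin kmax mumax : R -> R) : R :=
  let I := fun a => exp (- RInt mumax 0 a) in
  let B := 2 * A * supnorm A kmax in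
  A * Rpower B (B - 1) /
  (RInt (fun a => a * kmin a * I a) 0 A * ln (RInt (fun a => kmin a * I a) 0 A)).

(* Main.v *)
Require Import Defs.
From Stdlib Require Import Reals Lra.
From Coquelicot Require Import Coquelicot.
Open Scope R_scope.

Definition clamp (A x : R) := Rmax 0 (Rmin A x).

Lemma clamp_in A x : 0 <= A -> 0 <= clamp A x <= A.
Proof. intros; unfold clamp, Rmax, Rmin; repeat destruct Rle_dec; lra. Qed.

Lemma clamp_id A x : 0 <= x <= A -> clamp A x = x.
Proof. intros; unfold clamp, Rmax, Rmin; repeat destruct Rle_dec; lra. Qed.

Lemma clamp_lip A x y : 0 <= A -> Rabs (clamp A x - clamp A y) <= Rabs (x - y).
Proof. intros; unfold clamp, Rmax, Rmin; repeat destruct Rle_dec; unfold Rabs; repeat destruct Rcase_abs; lra. Qed.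

Lemma lip_continuous (f : R -> R) K :
  (forall x y, Rabs (f x - f y) <= K * Rabs (x - y)) -> forall x, continuous f x.
Proof.
  intros H x. apply continuity_pt_filterlim.
  intros eps Heps.
  assert (H' : forall x y, Rabs (f x - f y) <= Rabs K * Rabs (x - y)).
  { intros a b. eapply Rle_trans. apply H. apply Rmult_le_compat_r. apply Rabs_pos. apply RRle_abs. }
  clear H. rename H' into H. assert (HK := Rabs_pos K). set (K' := Rabs K) in *. clearbody K'. clear K. rename K' into K.
  exists (eps / (K + 1)). split. apply Rdiv_lt_0_compat; lra.
  intros y [_ Hy]. simpl in Hy. unfold R_dist in *.
  eapply Rle_lt_trans. apply H.
  apply Rle_lt_trans with (K * (eps / (K+1))).
  apply Rmult_le_compat_l; lra.
  apply Rlt_le_trans with ((K+1) * (eps/(K+1))). apply Rmult_lt_compat_r. apply Rdiv_lt_0_compat; lra. lra.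
  right; field; lra.
Qed.

Definition ext (A : R) (f : R -> R) := exists g : R -> R, (forall x, continuous g x) /\ forall x, 0 <= x <= A -> g x = f x.

Lemma ext_lip A f : 0 <= A -> lipschitz_on A f -> ext A f.
Proof.
  intros HA [K HK]. exists (fun x => f (clamp A x)). split.
  - apply lip_continuous with (Rabs K). intros x y.
    eapply Rle_trans. apply HK; apply clamp_in; lra.
    eapply Rle_trans. apply Rmult_le_compat_r. apply Rabs_pos. apply RRle_abs.
    apply Rmult_le_compat_l. apply Rabs_pos. apply clamp_lip; lra.
  - intros; rewrite clamp_id; auto.
Qed.

Lemma ext_plus A f g : ext A f -> ext A g -> ext A (fun x => f x + g x).
Proof.
  intros [f' [Hf Ef]] [g' [Hg Eg]]. exists (fun x => f' x + g' x). split.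
  intros x. apply (continuous_plus f' g'); auto.
  intros x Hx; rewrite Ef, Eg; auto.
Qed.
Lemma ext_mult A f g : ext A f -> ext A g -> ext A (fun x => f x * g x).
Proof.
  intros [f' [Hf Ef]] [g' [Hg Eg]]. exists (fun x => f' x * g' x). split.
  intros x. apply (continuous_mult f' g'); auto.
  intros x Hx; rewrite Ef, Eg; auto.
Qed.
Lemma ext_opp A f : ext A f -> ext A (fun x => - f x).
Proof.
  intros [f' [Hf Ef]]. exists (fun x => - f' x). split.
  intros x. apply (continuous_opp f'); auto.
  intros x Hx; rewrite Ef; auto.
Qed.
Lemma ext_minus A f g : ext A f -> ext A g -> ext A (fun x => f x - g x).
Proof. intros. apply ext_plus; auto. apply ext_opp; auto. Qed.
Lemma ext_const A c : ext A (fun _ => c).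
Proof. exists (fun _ => c). split. intros; apply continuous_const. auto. Qed.
Lemma ext_id A : ext A (fun x => x).
Proof. exists (fun x => x). split. intros; apply continuous_id. auto. Qed.
Lemma ext_exp A f : ext A f -> ext A (fun x => exp (f x)).
Proof.
  intros [f' [Hf Ef]]. exists (fun x => exp (f' x)). split.
  intros x. apply continuous_exp_comp; auto.
  intros x Hx; rewrite Ef; auto.
Qed.
Lemma ext_ext A f g : ext A f -> (forall x, 0 <= x <= A -> f x = g x) -> ext A g.
Proof.
  intros [f' [Hf Ef]] E. exists f'. split; auto. intros; rewrite Ef, E; auto.
Qed.

Lemma ext_ex_RInt A f a b : ext A f -> 0 <= a <= A -> 0 <= b <= A -> ex_RInt f a b.
Proof.
  intros [f' [Hf Ef]] Ha Hb.
  apply ex_RInt_ext with f'.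
  intros x Hx. apply Ef. split.
  apply Rle_trans with (Rmin a b). apply Rmin_glb; lra. lra.
  apply Rle_trans with (Rmax a b). lra. apply Rmax_lub; lra.
  apply (ex_RInt_continuous (V:=R_CompleteNormedModule)). intros; apply Hf.
Qed.

Lemma RInt_ext_on A (f g : R -> R) a b : 0 <= a <= A -> 0 <= b <= A ->
  (forall x, 0 <= x <= A -> f x = g x) -> RInt f a b = RInt g a b.
Proof.
  intros Ha Hb E. apply RInt_ext. intros x Hx. apply E. split.
  apply Rle_trans with (Rmin a b). apply Rmin_glb; lra. lra.
  apply Rle_trans with (Rmax a b). lra. apply Rmax_lub; lra.
Qed.

Lemma ext_RInt A (mu : R -> R) : 0 <= A -> ext A mu -> ext A (fun a => RInt mu 0 a).
Proof.
  intros HA [m [Hm Em]]. exists (fun a => RInt m 0 a). split.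
  - intros x. apply (continuous_RInt_1 (V:=R_NormedModule) m 0). apply filter_forall. intros y.
    apply (RInt_correct (V:=R_CompleteNormedModule)). apply (ex_RInt_continuous (V:=R_CompleteNormedModule)). intros; apply Hm.
  - intros x Hx. apply RInt_ext_on with A; auto. lra.
Qed.

Lemma lip_bound A f : 0 <= A -> lipschitz_on A f -> exists M, forall a, 0 <= a <= A -> Rabs (f a) <= M.
Proof.
  intros HA [K HK]. exists (Rabs (f 0) + Rabs K * A). intros a Ha.
  specialize (HK a 0 Ha ltac:(lra)).
  assert (Rabs (f a - f 0) <= Rabs K * A).
  { eapply Rle_trans. apply HK. eapply Rle_trans. apply Rmult_le_compat_r. apply Rabs_pos. apply RRle_abs.
    apply Rmult_le_compat_l. apply Rabs_pos. rewrite Rminus_0_r, Rabs_right; lra. }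
  assert (Rabs (f a) <= Rabs (f a - f 0) + Rabs (f 0)).
  { replace (f a) with ((f a - f 0) + f 0) at 1 by ring. apply Rabs_triang. }
  lra.
Qed.

Lemma supnorm_ge A f a : 0 <= A -> lipschitz_on A f -> 0 <= a <= A -> Rabs (f a) <= supnorm A f.
Proof.
  intros HA Hl Ha. destruct (lip_bound A f HA Hl) as [M HM].
  unfold supnorm.
  destruct (Lub_Rbar_correct (fun y => exists a, 0 <= a <= A /\ y = Rabs (f a))) as [Hub Hlub].
  assert (H1 := Hub (Rabs (f a)) (ex_intro _ a (conj Ha eq_refl))).
  assert (H2 : Rbar_le (Lub_Rbar (fun y => exists a, 0 <= a <= A /\ y = Rabs (f a))) M).
  { apply Hlub. intros y [b [Hb ->]]. simpl. apply HM; auto. }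
  destruct (Lub_Rbar _); simpl in *; tauto.
Qed.

Lemma lip_minus A f g : lipschitz_on A f -> lipschitz_on A g -> lipschitz_on A (fun x => f x - g x).
Proof.
  intros [K1 H1] [K2 H2]. exists (Rabs K1 + Rabs K2). intros a s Ha Hs.
  specialize (H1 a s Ha Hs). specialize (H2 a s Ha Hs).
  assert (K1 * Rabs (a - s) <= Rabs K1 * Rabs (a - s)) by (apply Rmult_le_compat_r; [apply Rabs_pos|apply RRle_abs]).
  assert (K2 * Rabs (a - s) <= Rabs K2 * Rabs (a - s)) by (apply Rmult_le_compat_r; [apply Rabs_pos|apply RRle_abs]).
  replace (f a - g a - (f s - g s)) with ((f a - f s) - (g a - g s)) by ring.
  eapply Rle_trans. apply Rabs_triang. rewrite Rabs_Ropp. lra.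
Qed.

Lemma RInt_minus' (f g : R -> R) a b : ex_RInt f a b -> ex_RInt g a b ->
  RInt (fun x => f x - g x) a b = RInt f a b - RInt g a b.
Proof. intros. exact (RInt_minus (V:=R_CompleteNormedModule) f g a b H H0). Qed.

Lemma RInt_scal' (f : R -> R) a b c : ex_RInt f a b ->
  RInt (fun x => c * f x) a b = c * RInt f a b.
Proof. intros. exact (RInt_scal (V:=R_CompleteNormedModule) f a b c H). Qed.

Lemma RInt_const' a b c : RInt (fun _ => c) a b = (b - a) * c.
Proof. exact (RInt_const (V:=R_CompleteNormedModule) a b c). Qed.

Lemma RInt_le_on A (f g : R -> R) b : 0 <= b <= A -> ext A f -> ext A g ->
  (forall x, 0 <= x <= A -> f x <= g x) -> RInt f 0 b <= RInt g 0 b.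
Proof.
  intros Hb Hf Hg H. apply RInt_le. lra.
  apply ext_ex_RInt with A; auto; lra.
  apply ext_ex_RInt with A; auto; lra.
  intros; apply H; lra.
Qed.

Lemma RInt_ge0_on A (f : R -> R) b : 0 <= b <= A -> ext A f ->
  (forall x, 0 <= x <= A -> 0 <= f x) -> 0 <= RInt f 0 b.
Proof.
  intros Hb Hf H. assert (E : RInt (fun _ => 0) 0 b = 0). { rewrite RInt_const'. apply Rmult_0_r. }
  rewrite <- E at 1. apply RInt_le_on with A; auto. apply ext_const.
Qed.

Lemma exp_diff_le_aux x y : 0 <= x -> x <= y -> 0 <= exp (-x) - exp (-y) <= y - x.
Proof.
  intros Hx Hxy.
  assert (E : exp (-y) = exp (-x) * exp (-(y-x))) by (rewrite <- exp_plus; f_equal; ring).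
  assert (H1 := exp_ineq1_le (-(y-x))).
  assert (H2 : exp (-(y-x)) <= 1). { rewrite <- exp_0. destruct (Req_dec (y-x) 0). rewrite H, Ropp_0; lra. left; apply exp_increasing; lra. }
  assert (H3 : exp (-x) <= 1). { rewrite <- exp_0. destruct (Req_dec x 0). rewrite H, Ropp_0; lra. left; apply exp_increasing; lra. }
  assert (H4 := exp_pos (-x)).
  rewrite E. split. 
  - assert (exp (-x) * exp (-(y-x)) <= exp (-x) * 1) by (apply Rmult_le_compat_l; lra). lra.
  - assert (exp (-x) * (1 - exp (-(y-x))) <= 1 * (y - x)). apply Rmult_le_compat; lra. lra.
Qed.

Lemma exp_diff_le x y : 0 <= x -> 0 <= y -> Rabs (exp (-x) - exp (-y)) <= Rabs (x - y).
Proof.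
  intros Hx Hy. destruct (Rle_dec x y).
  - destruct (exp_diff_le_aux x y Hx r). rewrite Rabs_right by lra. rewrite Rabs_left1 by lra. lra.
  - destruct (exp_diff_le_aux y x Hy ltac:(lra)). rewrite Rabs_left1 by lra. rewrite Rabs_right by lra. lra.
Qed.

Definition Fz A (k mu : R -> R) z := RInt (fun a => k a * exp (- z * a - RInt mu 0 a)) 0 A.

Lemma ext_integrand A k mu z : 0 <= A -> ext A k -> ext A mu -> ext A (fun a => k a * exp (- z * a - RInt mu 0 a)).
Proof.
  intros. apply ext_mult; auto. apply ext_exp. apply ext_minus. apply ext_mult. apply ext_const. apply ext_id.
  apply ext_RInt; auto.
Qed.

Lemma ext_integrand2 A k mu z : 0 <= A -> ext A k -> ext A mu -> ext A (fun a => a * k a * exp (- z * a - RInt mu 0 a)).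
Proof.
  intros. apply ext_ext with (fun a => a * (k a * exp (- z * a - RInt mu 0 a))).
  apply ext_mult. apply ext_id. apply ext_integrand; auto. intros; ring.
Qed.

Lemma M_nonneg A mu a : ext A mu -> (forall x, 0 <= x <= A -> 0 <= mu x) -> 0 <= a <= A -> 0 <= RInt mu 0 a.
Proof. intros. apply RInt_ge0_on with A; auto. Qed.

Lemma M_le A mu1 mu2 a : ext A mu1 -> ext A mu2 -> (forall x, 0 <= x <= A -> mu1 x <= mu2 x) -> 0 <= a <= A -> RInt mu1 0 a <= RInt mu2 0 a.
Proof. intros. apply RInt_le_on with A; auto. Qed.

Lemma M_diff A mu mu' S a : ext A mu -> ext A mu' -> (forall x, 0 <= x <= A -> Rabs (mu' x - mu x) <= S) -> 0 <= a <= A ->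
  Rabs (RInt mu' 0 a - RInt mu 0 a) <= A * S.
Proof.
  intros Hm Hm' HS Ha. assert (0 <= S) by (eapply Rle_trans; [apply Rabs_pos| apply (HS 0)]; lra).
  rewrite <- RInt_minus' by (apply ext_ex_RInt with A; auto; lra).
  eapply Rle_trans. apply abs_RInt_le_const. lra. apply ext_ex_RInt with A. apply ext_minus; auto. lra. lra.
  intros; apply HS; lra.
  rewrite Rminus_0_r. apply Rmult_le_compat_r; lra.
Qed.

Lemma gap A k mu z1 z2 : 0 <= A -> ext A k -> ext A mu -> (forall x, 0 <= x <= A -> 0 <= k x) -> z1 <= z2 ->
  (z2 - z1) * RInt (fun a => a * k a * exp (- z2 * a - RInt mu 0 a)) 0 A <= Fz A k mu z1 - Fz A k mu z2.
Proof.
  intros HA Hk Hmu Hk0 Hz. unfold Fz.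
  rewrite <- RInt_scal' by (apply ext_ex_RInt with A; try apply ext_integrand2; auto; lra).
  rewrite <- RInt_minus' by (apply ext_ex_RInt with A; try apply ext_integrand; auto; lra).
  apply RInt_le_on with A; auto. lra.
  apply ext_ext with (fun a => (z2 - z1) * (a * k a * exp (- z2 * a - RInt mu 0 a))). 
  apply ext_mult. apply ext_const. apply ext_integrand2; auto. auto.
  apply ext_minus; apply ext_integrand; auto.
  intros a Ha.
  set (u := exp (- z2 * a - RInt mu 0 a)).
  assert (E : exp (- z1 * a - RInt mu 0 a) = u * exp ((z2 - z1) * a)) by (unfold u; rewrite <- exp_plus; f_equal; ring).
  rewrite E. assert (He := exp_ineq1_le ((z2 - z1) * a)).
  assert (Hu : 0 < u) by apply exp_pos.
  assert (0 <= k a * u * (exp ((z2 - z1) * a) - 1 - (z2 - z1) * a)).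
  { apply Rmult_le_pos. apply Rmult_le_pos; auto; lra. lra. }
  nra.
Qed.

Lemma Dlow A k mu kmin mumax z : 0 <= A -> ext A k -> ext A mu -> ext A kmin -> ext A mumax ->
  (forall x, 0 <= x <= A -> 0 <= kmin x) -> (forall x, 0 <= x <= A -> kmin x <= k x) ->
  (forall x, 0 <= x <= A -> mu x <= mumax x) -> 0 <= z ->
  exp (- z * A) * RInt (fun a => a * kmin a * exp (- RInt mumax 0 a)) 0 A
  <= RInt (fun a => a * k a * exp (- z * a - RInt mu 0 a)) 0 A.
Proof.
  intros HA Hk Hmu Hkm Hmm Hkm0 Hkk Hmm' Hz.
  rewrite <- RInt_scal'.
  2:{ apply ext_ex_RInt with A; try lra. apply ext_ext with (fun a => a * kmin a * exp (- 0 * a - RInt mumax 0 a)).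
      apply ext_integrand2; auto. intros; do 2 f_equal; ring. }
  apply RInt_le_on with A; try lra.
  apply ext_mult. apply ext_const. apply ext_ext with (fun a => a * kmin a * exp (- 0 * a - RInt mumax 0 a)).
      apply ext_integrand2; auto. intros; do 2 f_equal; ring.
  apply ext_integrand2; auto.
  intros a Ha.
  assert (HM := M_le A mu mumax a Hmu Hmm Hmm' Ha).
  assert (Ee : exp (- z * A) * exp (- RInt mumax 0 a) <= exp (- z * a - RInt mu 0 a)).
  { rewrite <- exp_plus. destruct (Req_dec (- z * A + - RInt mumax 0 a) (- z * a - RInt mu 0 a)) as [e|n].
    rewrite e; lra. left; apply exp_increasing. assert (z * a <= z * A) by (apply Rmult_le_compat_l; lra). lra. }
  assert (0 <= a * kmin a) by (apply Rmult_le_pos; [lra|auto]).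
  assert (a * kmin a <= a * k a) by (apply Rmult_le_compat_l; [lra|auto]).
  assert (0 <= exp (- z * A) * exp (- RInt mumax 0 a)) by (left; apply Rmult_lt_0_compat; apply exp_pos).
  replace (exp (- z * A) * (a * kmin a * exp (- RInt mumax 0 a))) with ((a * kmin a) * (exp (- z * A) * exp (- RInt mumax 0 a))) by ring.
  apply Rmult_le_compat; lra.
Qed.

Lemma RInt_Chasles' (f : R -> R) a b c : ex_RInt f a b -> ex_RInt f b c -> RInt f a b + RInt f b c = RInt f a c.
Proof. intros. exact (RInt_Chasles (V:=R_CompleteNormedModule) f a b c H H0). Qed.

Lemma D0_pos A kmin mumax K : 0 < A -> ext A kmin -> ext A mumax -> 0 <= K ->
  (forall x, 0 <= x <= A -> 0 <= kmin x) -> (forall x, 0 <= x <= A -> kmin x <= K) ->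
  (forall x, 0 <= x <= A -> 0 <= mumax x) ->
  RInt (fun a => kmin a * exp (- RInt mumax 0 a)) 0 A > 1 ->
  0 < RInt (fun a => a * kmin a * exp (- RInt mumax 0 a)) 0 A.
Proof.
  intros HA Hk Hm HK Hk0 HkK Hm0 HR.
  set (f := fun a => kmin a * exp (- RInt mumax 0 a)).
  assert (Hf : ext A f). { apply ext_mult; auto. apply ext_exp. apply ext_opp. apply ext_RInt; auto; lra. }
  assert (Haf : ext A (fun a => a * kmin a * exp (- RInt mumax 0 a))).
  { apply ext_ext with (fun a => a * f a). apply ext_mult; auto. apply ext_id. intros; unfold f; ring. }
  assert (Hf0 : forall x, 0 <= x <= A -> 0 <= f x). { intros; unfold f. apply Rmult_le_pos; auto. left; apply exp_pos. }
  assert (HfK : forall x, 0 <= x <= A -> f x <= K).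
  { intros x Hx; unfold f. assert (exp (- RInt mumax 0 x) <= 1).
    { rewrite <- exp_0. assert (0 <= RInt mumax 0 x) by (apply M_nonneg with A; auto).
      destruct (Req_dec (RInt mumax 0 x) 0) as [e|n]. rewrite e, Ropp_0; lra. left; apply exp_increasing; lra. }
    assert (kmin x * exp (- RInt mumax 0 x) <= K * 1). apply Rmult_le_compat; auto. left; apply exp_pos. lra. }
  set (t := Rmin A (/ (K + 1))).
  assert (Ht0 : 0 < t). { unfold t. apply Rmin_glb_lt; auto. apply Rinv_0_lt_compat; lra. }
  assert (HtA : t <= A) by apply Rmin_l.
  assert (HtK : t * K < 1).
  { assert (t <= / (K+1)) by apply Rmin_r. apply Rle_lt_trans with (/(K+1) * K). apply Rmult_le_compat_r; lra.
    apply Rmult_lt_reg_l with (K + 1). lra. field_simplify; lra. }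
  rewrite <- (RInt_Chasles' _ 0 t A) by (apply ext_ex_RInt with A; auto; lra).
  assert (H1 : 0 <= RInt (fun a => a * kmin a * exp (- RInt mumax 0 a)) 0 t).
  { apply RInt_ge0_on with A; [split; lra|auto|]. intros x Hx. replace (x * kmin x * exp (- RInt mumax 0 x)) with (x * f x) by (unfold f; ring). apply Rmult_le_pos. lra. auto. }
  assert (H2 : RInt (fun a => t * f a) t A <= RInt (fun a => a * kmin a * exp (- RInt mumax 0 a)) t A).
  { apply RInt_le. auto. apply ext_ex_RInt with A. apply ext_mult; auto. apply ext_const. lra. lra.
    apply ext_ex_RInt with A; auto; lra. intros x Hx. fold (f x).
    replace (x * kmin x * exp (- RInt mumax 0 x)) with (x * f x) by (unfold f; ring).
    apply Rmult_le_compat_r. apply Hf0; lra. lra. }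
  rewrite RInt_scal' in H2 by (apply ext_ex_RInt with A; auto; lra).
  assert (H3 : RInt f 0 t + RInt f t A = RInt f 0 A) by (apply RInt_Chasles'; apply ext_ex_RInt with A; auto; lra).
  assert (H4 : RInt f 0 t <= RInt (fun _ => K) 0 t) by (apply RInt_le_on with A; auto; [lra| apply ext_const]).
  rewrite RInt_const' in H4.
  fold f in HR.
  assert (0 < t * (RInt f t A)). apply Rmult_lt_0_compat; auto. nra.
  lra.
Qed.

Lemma RInt_exp_neg z A : 0 < z -> RInt (fun a => exp (- z * a)) 0 A = (1 - exp (- z * A)) / z.
Proof.
  intros Hz.
  assert (H : is_RInt (fun a => exp (- z * a)) 0 A (minus ((fun x => - exp (- z * x) / z) A) ((fun x => - exp (- z * x) / z) 0))).
  { apply (is_RInt_derive (V:=R_CompleteNormedModule) (fun x => - exp (- z * x) / z) (fun a => exp (- z * a)) 0 A).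
    - intros x _. auto_derive. auto. field. lra.
    - intros x _. apply continuous_exp_comp. apply (continuous_mult (fun _ => - z) (fun x => x)). apply continuous_const. apply continuous_id. }
  apply (is_RInt_unique (V:=R_CompleteNormedModule)) in H. rewrite H. unfold minus, plus, opp; simpl.
  replace (- z * 0) with 0 by ring. rewrite exp_0. field. lra.
Qed.

Lemma Fz_upper A k mu K z : 0 < A -> ext A k -> ext A mu -> (forall x, 0 <= x <= A -> 0 <= k x <= K) ->
  (forall x, 0 <= x <= A -> 0 <= mu x) -> 0 < z -> Fz A k mu z <= K / z.
Proof.
  intros HA Hk Hm HkK Hm0 Hz. unfold Fz.
  apply Rle_trans with (RInt (fun a => K * exp (- z * a)) 0 A).
  apply RInt_le_on with A; try (split; lra). apply ext_integrand; auto; lra.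
  apply ext_mult. apply ext_const. apply ext_exp. apply ext_mult. apply ext_const. apply ext_id.
  intros a Ha. destruct (HkK a Ha). apply Rmult_le_compat; auto. left; apply exp_pos.
  assert (0 <= RInt mu 0 a) by (apply M_nonneg with A; auto).
  destruct (Req_dec (RInt mu 0 a) 0) as [e|n]. rewrite e; right; f_equal; ring. left; apply exp_increasing; lra.
  rewrite RInt_scal'. rewrite RInt_exp_neg by auto.
  assert (0 <= K) by (destruct (HkK 0); lra).
  assert (0 < exp (- z * A)) by apply exp_pos.
  unfold Rdiv. rewrite <- Rmult_assoc. apply Rmult_le_compat_r. left; apply Rinv_0_lt_compat; auto. nra.
  apply ext_ex_RInt with A. apply ext_exp. apply ext_mult. apply ext_const. apply ext_id. lra. lra.
Qed.

Lemma num_ineq A K r w : 1 < r -> r <= A * K -> w <= A * K -> 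
  exp w * ln r <= Rpower (2 * A * K) (2 * A * K - 1).
Proof.
  intros Hr HrA Hw. set (x := A * K) in *.
  assert (Hx : 1 < x) by lra.
  replace (2 * A * K) with (2 * x) by (unfold x; ring).
  assert (H1 := exp_ineq1_le (ln r)). rewrite exp_ln in H1 by lra.
  assert (H0 : 0 < ln r) by (rewrite <- ln_1; apply ln_increasing; lra).
  assert (H2 : exp w <= exp x) by (destruct (Req_dec w x) as [e|n]; [rewrite e; lra| left; apply exp_increasing; lra]).
  apply Rle_trans with (exp x * (x - 1)).
  apply Rmult_le_compat; try lra. left; apply exp_pos.
  replace (x - 1) with (exp (ln (x - 1))) by (apply exp_ln; lra).
  rewrite <- exp_plus. unfold Rpower.
  assert (H3 := exp_ineq1_le (ln (x - 1))). rewrite exp_ln in H3 by lra.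
  assert (H4 := exp_ineq1_le (ln (/ (2 * x)))). rewrite exp_ln in H4 by (apply Rinv_0_lt_compat; lra).
  rewrite ln_Rinv in H4 by lra.
  assert (H5 : (2 * x - 1) * (1 - / (2 * x)) <= (2 * x - 1) * ln (2 * x)) by (apply Rmult_le_compat_l; lra).
  assert (H6 : (2 * x - 1) * (1 - / (2 * x)) = (2 * x - 1) * (2 * x - 1) / (2 * x)) by (field; lra).
  assert (H7 : 2 * x - 2 <= (2 * x - 1) * (2 * x - 1) / (2 * x)).
  { apply Rmult_le_reg_r with (2 * x). lra. field_simplify; try lra. }
  destruct (Req_dec (x + ln (x - 1)) ((2 * x - 1) * ln (2 * x))) as [e|n]. rewrite e; lra.
  left; apply exp_increasing. lra.
Qed.

Lemma exp_le_mono a b : a <= b -> exp a <= exp b.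
Proof. intros. destruct (Req_dec a b) as [e|n]. rewrite e; lra. left; apply exp_increasing; lra. Qed.

Lemma Fmono A k1 mu1 k2 mu2 z : 0 <= A -> ext A k1 -> ext A mu1 -> ext A k2 -> ext A mu2 ->
  (forall x, 0 <= x <= A -> 0 <= k1 x <= k2 x) -> (forall x, 0 <= x <= A -> mu2 x <= mu1 x) ->
  Fz A k1 mu1 z <= Fz A k2 mu2 z.
Proof.
  intros HA H1 H2 H3 H4 Hk Hm. unfold Fz. apply RInt_le_on with A; try (split; lra); try apply ext_integrand; auto.
  intros a Ha. destruct (Hk a Ha). apply Rmult_le_compat; auto. left; apply exp_pos.
  apply exp_le_mono. assert (RInt mu2 0 a <= RInt mu1 0 a) by (apply M_le with A; auto). lra.
Qed.

Lemma Flip A k mu K z1 z2 : 0 < A -> ext A k -> ext A mu -> (forall x, 0 <= x <= A -> 0 <= k x <= K) ->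
  (forall x, 0 <= x <= A -> 0 <= mu x) -> 0 <= z1 -> 0 <= z2 ->
  Rabs (Fz A k mu z1 - Fz A k mu z2) <= A * (K * A) * Rabs (z1 - z2).
Proof.
  intros HA Hk Hm HkK Hm0 Hz1 Hz2. unfold Fz.
  rewrite <- RInt_minus' by (apply ext_ex_RInt with A; try apply ext_integrand; auto; lra).
  eapply Rle_trans. apply abs_RInt_le_const with (M := K * A * Rabs (z1 - z2)). lra. apply ext_ex_RInt with A; try apply ext_minus; try apply ext_integrand; auto; lra.
  2: rewrite Rminus_0_r; right; ring.
  intros a Ha. destruct (HkK a Ha).
  assert (0 <= RInt mu 0 a) by (apply M_nonneg with A; auto).
  replace (- z1 * a - RInt mu 0 a) with (- (z1 * a + RInt mu 0 a)) by ring.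
  replace (- z2 * a - RInt mu 0 a) with (- (z2 * a + RInt mu 0 a)) by ring.
  rewrite <- Rmult_minus_distr_l.
  rewrite Rabs_mult. rewrite Rabs_right by lra.
  assert (E := exp_diff_le (z1 * a + RInt mu 0 a) (z2 * a + RInt mu 0 a) ltac:(nra) ltac:(nra)).
  replace (z1 * a + RInt mu 0 a - (z2 * a + RInt mu 0 a)) with ((z1 - z2) * a) in E by ring.
  rewrite Rabs_mult, (Rabs_right a) in E by lra.
  assert (Rabs (z1 - z2) * a <= Rabs (z1 - z2) * A) by (apply Rmult_le_compat_l; [apply Rabs_pos|lra]).
  assert (HH := Rabs_pos (exp (- (z1 * a + RInt mu 0 a)) - exp (- (z2 * a + RInt mu 0 a)))).
  apply Rle_trans with (K * (Rabs (z1 - z2) * A)). apply Rmult_le_compat; lra. right; ring.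
Qed.

Lemma Rmax0_lip x y : Rabs (Rmax 0 x - Rmax 0 y) <= Rabs (x - y).
Proof. unfold Rmax; repeat destruct Rle_dec; unfold Rabs; repeat destruct Rcase_abs; lra. Qed.

Lemma exists_root A k mu K : 0 < A -> ext A k -> ext A mu -> (forall x, 0 <= x <= A -> 0 <= k x <= K) ->
  (forall x, 0 <= x <= A -> 0 <= mu x) -> Fz A k mu 0 > 1 -> exists z, 0 < z /\ Fz A k mu z = 1.
Proof.
  intros HA Hk Hm HkK Hm0 HF.
  assert (HK : 0 <= K) by (destruct (HkK 0); lra).
  set (f := fun z => 1 - Fz A k mu (Rmax 0 z)).
  assert (Hc : continuity f).
  { intros x. apply continuity_pt_filterlim. apply lip_continuous with (A * (K * A)).
    intros u v. unfold f.
    replace (1 - Fz A k mu (Rmax 0 u) - (1 - Fz A k mu (Rmax 0 v))) with (- (Fz A k mu (Rmax 0 u) - Fz A k mu (Rmax 0 v))) by ring.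
    rewrite Rabs_Ropp. eapply Rle_trans. apply Flip; auto; apply Rmax_l.
    apply Rmult_le_compat_l. apply Rmult_le_pos; nra. apply Rmax0_lip. }
  assert (Hf0 : f 0 < 0). { unfold f. rewrite Rmax_left by lra. lra. }
  assert (Hf1 : 0 < f (K + 1)).
  { unfold f. rewrite Rmax_right by lra. assert (H := Fz_upper A k mu K (K + 1) HA Hk Hm HkK Hm0 ltac:(lra)).
    assert (K / (K + 1) < 1). { apply Rmult_lt_reg_r with (K + 1). lra. unfold Rdiv. rewrite Rmult_assoc, Rinv_l by lra. lra. }
    lra. }
  destruct (IVT f 0 (K + 1) Hc ltac:(lra) Hf0 Hf1) as [z [Hz Hfz]].
  unfold f in Hfz. rewrite Rmax_right in Hfz by lra.
  exists z. split. destruct (Req_dec z 0) as [e|n]. rewrite e in Hfz. lra. lra. lra.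
Qed.

Lemma core A kmin mumax K k mu k' mu' z z' zmax Sk Smu : 0 < A ->
  ext A kmin -> ext A mumax -> ext A k -> ext A mu -> ext A k' -> ext A mu' ->
  (forall x, 0 <= x <= A -> 0 <= kmin x) ->
  (forall x, 0 <= x <= A -> kmin x <= k x <= K) -> (forall x, 0 <= x <= A -> kmin x <= k' x <= K) ->
  (forall x, 0 <= x <= A -> 0 <= mu x) -> (forall x, 0 <= x <= A -> 0 <= mu' x) ->
  (forall x, 0 <= x <= A -> mu' x <= mumax x) ->
  Fz A k mu z = 1 -> Fz A k' mu' z' = 1 -> 0 <= z <= z' -> z' <= zmax ->
  (forall x, 0 <= x <= A -> Rabs (k' x - k x) <= Sk) -> (forall x, 0 <= x <= A -> Rabs (mu' x - mu x) <= Smu) ->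
  (z' - z) * (exp (- zmax * A) * RInt (fun a => a * kmin a * exp (- RInt mumax 0 a)) 0 A) <= A * (Sk + K * A * Smu).
Proof.
  intros HA Ekm Emm Ek Emu Ek' Emu' Hkm0 Hk Hk' Hmu0 Hmu0' Hmu' HF HF' Hz Hzm HSk HSmu.
  assert (HSk0 : 0 <= Sk) by (eapply Rle_trans; [apply Rabs_pos| apply (HSk 0)]; lra).
  assert (HSmu0 : 0 <= Smu) by (eapply Rle_trans; [apply Rabs_pos| apply (HSmu 0)]; lra).
  assert (HK : 0 <= K) by (destruct (Hk 0); [lra| specialize (Hkm0 0); lra]).
  assert (HD0 : 0 <= RInt (fun a => a * kmin a * exp (- RInt mumax 0 a)) 0 A).
  { apply RInt_ge0_on with A; [split; lra| |].
    apply ext_ext with (fun a => a * kmin a * exp (- 0 * a - RInt mumax 0 a)). apply ext_integrand2; auto; lra.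
    intros; do 2 f_equal; ring.
    intros x Hx. apply Rmult_le_pos. apply Rmult_le_pos; auto; lra. left; apply exp_pos. }
  assert (H1 := Dlow A k' mu' kmin mumax z' ltac:(lra) Ek' Emu' Ekm Emm Hkm0 ltac:(intros x Hx; apply Hk'; auto) Hmu' ltac:(lra)).
  assert (H2 : exp (- zmax * A) <= exp (- z' * A)) by (apply exp_le_mono; nra).
  assert (H3 := gap A k' mu' z z' ltac:(lra) Ek' Emu' ltac:(intros x Hx; specialize (Hk' x Hx); specialize (Hkm0 x Hx); lra) ltac:(lra)).
  rewrite HF' in H3.
  assert (H4 : Fz A k' mu' z - Fz A k mu z <= A * (Sk + K * A * Smu)).
  { unfold Fz. rewrite <- RInt_minus' by (apply ext_ex_RInt with A; try apply ext_integrand; auto; lra).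
    replace (A * (Sk + K * A * Smu)) with (RInt (fun _ => Sk + K * A * Smu) 0 A) by (rewrite RInt_const', Rminus_0_r; reflexivity).
    apply RInt_le_on with A; [split; lra| apply ext_minus; apply ext_integrand; auto; lra| apply ext_const|].
    intros a Ha.
    set (M := RInt mu 0 a). set (M' := RInt mu' 0 a).
    assert (HM : 0 <= M) by (apply M_nonneg with A; auto).
    assert (HM' : 0 <= M') by (apply M_nonneg with A; auto).
    assert (HMM := M_diff A mu mu' Smu a Emu Emu' HSmu Ha). fold M M' in HMM.
    assert (He := exp_diff_le M' M HM' HM).
    set (p := exp (- z * a)). set (q' := exp (- M')). set (q := exp (- M)).
    assert (Ep : forall N, exp (- z * a - N) = p * exp (- N)) by (intros; unfold p; rewrite <- exp_plus; f_equal; ring).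
    rewrite !Ep. fold q q'.
    assert (Hp : 0 < p) by apply exp_pos. assert (Hp1 : p <= 1) by (unfold p; rewrite <- exp_0; apply exp_le_mono; nra).
    assert (Hq : 0 < q') by apply exp_pos. assert (Hq1 : q' <= 1) by (unfold q'; rewrite <- exp_0; apply exp_le_mono; lra).
    assert (Hd := HSk a Ha). destruct (Hk a Ha) as [Hka HkK]. assert (Hkm := Hkm0 a Ha).
    assert (B1 : (k' a - k a) * q' <= Sk).
    { destruct (Rle_dec 0 (k' a - k a)). rewrite Rabs_right in Hd by lra.
      apply Rle_trans with ((k' a - k a) * 1). apply Rmult_le_compat_l; lra. lra.
      assert ((k' a - k a) * q' <= 0) by (apply Rmult_le_0_r; lra). lra. }
    assert (B2 : k a * (q' - q) <= K * (A * Smu)).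
    { assert (q' - q <= A * Smu) by (eapply Rle_trans; [apply RRle_abs| eapply Rle_trans; [apply He|lra]]).
      apply Rle_trans with (k a * (A * Smu)). apply Rmult_le_compat_l; lra.
      apply Rmult_le_compat_r. nra. lra. }
    replace (k' a * (p * q') - k a * (p * q)) with (p * ((k' a - k a) * q' + k a * (q' - q))) by ring.
    set (br := (k' a - k a) * q' + k a * (q' - q)).
    destruct (Rle_dec 0 br).
    apply Rle_trans with (1 * br). apply Rmult_le_compat_r; lra. unfold br; lra.
    assert (p * br <= 0) by (apply Rmult_le_0_l; lra). assert (0 <= K * A * Smu) by (apply Rmult_le_pos; [apply Rmult_le_pos|]; lra). lra. }
  assert (H5 : (z' - z) * (exp (- zmax * A) * RInt (fun a => a * kmin a * exp (- RInt mumax 0 a)) 0 A)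
              <= (z' - z) * RInt (fun a => a * k' a * exp (- z' * a - RInt mu' 0 a)) 0 A).
  { apply Rmult_le_compat_l. lra. eapply Rle_trans; [|apply H1]. apply Rmult_le_compat_r; auto. }
  lra.
Qed.

Lemma final_alg d e D0 A C P l : 0 <= d -> 0 < e -> 0 < D0 -> 0 < A -> 0 <= C -> 0 < l ->
  / e * l <= P -> d * (e * D0) <= A * C -> d <= A * P / (D0 * l) * C.
Proof.
  intros Hd He HD HA HC Hl HP H.
  assert (H1 : d <= A * C * / e * / D0).
  { apply Rmult_le_reg_r with (e * D0). nra.
    replace (A * C * / e * / D0 * (e * D0)) with (A * C) by (field; lra). lra. }
  assert (H2 : / e <= P / l).
  { apply Rmult_le_reg_r with l; auto. unfold Rdiv. rewrite Rmult_assoc, Rinv_l by lra. lra. }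
  eapply Rle_trans. apply H1.
  replace (A * P / (D0 * l) * C) with (A * C * (P / l) * / D0) by (field; lra).
  apply Rmult_le_compat_r. left; apply Rinv_0_lt_compat; auto.
  apply Rmult_le_compat_l. nra. auto.
Qed.

Theorem theorem1 (A G zmin zmax : R) (kmin kmax mumin mumax : R -> R)
  (hA : 0 < A)
  (hkmin : C0nonneg_lip A kmin) (hkmax : C0nonneg_lip A kmax)
  (hmumin : C0nonneg_lip A mumin) (hmumax : C0nonneg_lip A mumax)
  (hk : forall a, 0 <= a <= A -> kmin a <= kmax a)
  (hmu : forall a, 0 <= a <= A -> mumin a <= mumax a)
  (hR0 : RInt (fun a => kmin a * exp (- RInt mumax 0 a)) 0 A > 1)
  (hzmin : LS_eq A kmin mumax zmin)
  (hzmax : LS_eq A kmax mumin zmax)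
  (hG : 0 < G)
  (hGkmin : supnorm A kmin + lipconst A kmin <= G)
  (hGkmax : supnorm A kmax + lipconst A kmax <= G)
  (hGmumin : supnorm A mumin + lipconst A mumin <= G)
  (hGmumax : supnorm A mumax + lipconst A mumax <= G) :
  (forall k mu, inS A G kmin kmax mumin mumax k mu ->
     exists z, 0 < z /\ LS_eq A k mu z) /\
  (forall k mu z, inS A G kmin kmax mumin mumax k mu -> LS_eq A k mu z ->
     zmin <= z <= zmax) /\
  (forall k mu z k' mu' z',
     inS A G kmin kmax mumin mumax k mu -> LS_eq A k mu z ->
     inS A G kmin kmax mumin mumax k' mu' -> LS_eq A k' mu' z' ->
     Rabs (z' - z) <=
       Lconst A kmin kmax mumax * supnorm A (fun a => k' a - k a)
       + Lconst A kmin kmax mumax * supnorm A kmax * A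
         * supnorm A (fun a => mu' a - mu a)).
Proof.
  assert (HA0 : 0 <= A) by lra.
  destruct hkmin as [_ [Nkmin Lkmin]]. destruct hkmax as [_ [Nkmax Lkmax]].
  destruct hmumin as [_ [Nmumin Lmumin]]. destruct hmumax as [_ [Nmumax Lmumax]].
  assert (Ekmin := ext_lip A kmin HA0 Lkmin). assert (Ekmax := ext_lip A kmax HA0 Lkmax).
  assert (Emumin := ext_lip A mumin HA0 Lmumin). assert (Emumax := ext_lip A mumax HA0 Lmumax).
  set (K := supnorm A kmax).
  assert (HK : forall a, 0 <= a <= A -> kmax a <= K).
  { intros a Ha. eapply Rle_trans. apply RRle_abs. apply supnorm_ge; auto. }
  assert (Adm : forall k mu, inS A G kmin kmax mumin mumax k mu ->
     ext A k /\ ext A mu /\ lipschitz_on A k /\ lipschitz_on A mu /\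
     (forall x, 0 <= x <= A -> kmin x <= k x <= K) /\ (forall x, 0 <= x <= A -> 0 <= k x <= K) /\
     (forall x, 0 <= x <= A -> 0 <= mu x) /\ (forall x, 0 <= x <= A -> mumin x <= mu x <= mumax x)).
  { intros k mu [[[_ [_ Lk]] _] [[[_ [_ Lm]] _] [Hkb Hmb]]].
    split. apply ext_lip; auto. split. apply ext_lip; auto. split; auto. split; auto.
    split. intros x Hx; specialize (Hkb x Hx); specialize (HK x Hx); lra.
    split. intros x Hx; specialize (Hkb x Hx); specialize (HK x Hx); specialize (Nkmin x Hx); lra.
    split. intros x Hx; specialize (Hmb x Hx); specialize (Nmumin x Hx); lra. auto. }
  assert (HR0F : Fz A kmin mumax 0 > 1).
  { assert (E : Fz A kmin mumax 0 = RInt (fun a => kmin a * exp (- RInt mumax 0 a)) 0 A) by (unfold Fz; apply RInt_ext_on with A; [split; lra|split; lra|intros; do 2 f_equal; ring]). rewrite E; exact hR0. }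
  assert (HD0 : 0 < RInt (fun a => a * kmin a * exp (- RInt mumax 0 a)) 0 A).
  { apply D0_pos with K; auto. apply Rle_trans with (Rabs (kmax 0)). apply Rabs_pos. apply supnorm_ge; auto; lra.
    intros x Hx. specialize (hk x Hx). specialize (HK x Hx). lra. }
  assert (Fzmin : Fz A kmin mumax zmin = 1) by exact hzmin.
  assert (Fzmax : Fz A kmax mumin zmax = 1) by exact hzmax.
  assert (Hzmin0 : 0 < zmin).
  { destruct (Rlt_dec 0 zmin) as [r|n]; auto. exfalso.
    assert (H := gap A kmin mumax zmin 0 HA0 Ekmin Emumax Nkmin ltac:(lra)).
    assert (0 <= RInt (fun a => a * kmin a * exp (- 0 * a - RInt mumax 0 a)) 0 A).
    { apply RInt_ge0_on with A; [split; lra| apply ext_integrand2; auto|].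
      intros x Hx. apply Rmult_le_pos. apply Rmult_le_pos; auto; lra. left; apply exp_pos. }
    assert (0 <= (0 - zmin) * RInt (fun a => a * kmin a * exp (- 0 * a - RInt mumax 0 a)) 0 A) by (apply Rmult_le_pos; lra).
    lra. }
  assert (Part2 : forall k mu z, ext A k -> ext A mu -> (forall x, 0 <= x <= A -> kmin x <= k x <= kmax x) ->
       (forall x, 0 <= x <= A -> mumin x <= mu x <= mumax x) -> Fz A k mu z = 1 -> zmin <= z <= zmax).
  { intros k mu z Ek Em Hkb Hmb Fz1. assert (Hlow : zmin <= z).
    { destruct (Rle_dec zmin z) as [r|n]; auto. exfalso.
      assert (H := gap A kmin mumax z zmin HA0 Ekmin Emumax Nkmin ltac:(lra)).
      assert (H2 := Dlow A kmin mumax kmin mumax zmin HA0 Ekmin Emumax Ekmin Emumax Nkmin ltac:(intros; lra) ltac:(intros; lra) ltac:(lra)).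
      assert (H3 : Fz A kmin mumax z <= Fz A k mu z).
      { apply Fmono; auto. intros x Hx; specialize (Hkb x Hx); specialize (Nkmin x Hx); lra. intros x Hx; apply Hmb; auto. }
      assert (0 < exp (- zmin * A) * RInt (fun a => a * kmin a * exp (- RInt mumax 0 a)) 0 A) by (apply Rmult_lt_0_compat; auto; apply exp_pos).
      assert (0 < (zmin - z) * (exp (- zmin * A) * RInt (fun a => a * kmin a * exp (- RInt mumax 0 a)) 0 A)) by (apply Rmult_lt_0_compat; lra).
      assert ((zmin - z) * (exp (- zmin * A) * RInt (fun a => a * kmin a * exp (- RInt mumax 0 a)) 0 A) <=
              (zmin - z) * RInt (fun a => a * kmin a * exp (- zmin * a - RInt mumax 0 a)) 0 A) by (apply Rmult_le_compat_l; lra).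
      lra. }
    split; auto.
    - destruct (Rle_dec z zmax) as [r|n]; auto. exfalso.
      assert (H := gap A kmax mumin zmax z HA0 Ekmax Emumin Nkmax ltac:(lra)).
      assert (H2 := Dlow A kmax mumin kmin mumax z HA0 Ekmax Emumin Ekmin Emumax Nkmin hk hmu ltac:(lra)).
      assert (H3 : Fz A k mu z <= Fz A kmax mumin z).
      { apply Fmono; auto. intros x Hx; specialize (Hkb x Hx); specialize (Nkmin x Hx); lra. intros x Hx; apply Hmb; auto. }
      assert (0 < exp (- z * A) * RInt (fun a => a * kmin a * exp (- RInt mumax 0 a)) 0 A) by (apply Rmult_lt_0_compat; auto; apply exp_pos).
      assert (0 < (z - zmax) * (exp (- z * A) * RInt (fun a => a * kmin a * exp (- RInt mumax 0 a)) 0 A)) by (apply Rmult_lt_0_compat; lra).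
      assert ((z - zmax) * (exp (- z * A) * RInt (fun a => a * kmin a * exp (- RInt mumax 0 a)) 0 A) <=
              (z - zmax) * RInt (fun a => a * kmax a * exp (- z * a - RInt mumin 0 a)) 0 A) by (apply Rmult_le_compat_l; lra).
      lra. }
  assert (Hzz : zmin <= zmax) by (apply (Part2 kmin mumax); auto; intros; split; auto; lra).
  assert (HzK : zmax <= K).
  { assert (H := Fz_upper A kmax mumin K zmax hA Ekmax Emumin ltac:(intros x Hx; split; auto) Nmumin ltac:(lra)).
    rewrite Fzmax in H. apply Rmult_le_reg_r with (/ zmax). apply Rinv_0_lt_compat; lra.
    rewrite Rinv_r by lra. exact H. }
  assert (HR0K : Fz A kmin mumax 0 <= A * K).
  { unfold Fz. replace (A * K) with (RInt (fun _ => K) 0 A) by (rewrite RInt_const', Rminus_0_r; reflexivity).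
    apply RInt_le_on with A; [split; lra| apply ext_integrand; auto | apply ext_const|].
    intros a Ha. specialize (hk a Ha). specialize (HK a Ha). specialize (Nkmin a Ha).
    assert (exp (- 0 * a - RInt mumax 0 a) <= 1).
    { rewrite <- exp_0. apply exp_le_mono. assert (0 <= RInt mumax 0 a) by (apply M_nonneg with A; auto). lra. }
    assert (kmin a * exp (- 0 * a - RInt mumax 0 a) <= K * 1). apply Rmult_le_compat; auto. left; apply exp_pos. lra. lra. }
  split; [|split].
  - intros k mu HS. destruct (Adm k mu HS) as [Ek [Em [_ [_ [Hkb [Hk0 [Hm0 Hmb]]]]]]].
    destruct (exists_root A k mu K hA Ek Em Hk0 Hm0) as [z [Hz Hz1]].
    + eapply Rlt_le_trans. apply HR0F. apply Fmono; auto. intros x Hx; specialize (Hkb x Hx); specialize (Nkmin x Hx); lra.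
      intros x Hx; apply Hmb; auto.
    + exists z; split; auto.
  - intros k mu z HS Hz. destruct (Adm k mu HS) as [Ek [Em [_ [_ [Hkb [Hk0 [Hm0 Hmb]]]]]]].
    apply (Part2 k mu); auto. intros x Hx; split; [apply Hkb; auto| destruct HS as [_ [_ [H _]]]; apply H; auto].
  - intros k mu z k' mu' z' HS Hz HS' Hz'.
    destruct (Adm k mu HS) as [Ek [Em [Lk [Lm [Hkb [Hk0 [Hm0 Hmb]]]]]]].
    destruct (Adm k' mu' HS') as [Ek' [Em' [Lk' [Lm' [Hkb' [Hk0' [Hm0' Hmb']]]]]]].
    assert (Z1 : zmin <= z <= zmax).
    { apply (Part2 k mu); auto. intros x Hx; split; [apply Hkb; auto| destruct HS as [_ [_ [H _]]]; apply H; auto]. }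
    assert (Z2 : zmin <= z' <= zmax).
    { apply (Part2 k' mu'); auto. intros x Hx; split; [apply Hkb'; auto| destruct HS' as [_ [_ [H _]]]; apply H; auto]. }
    set (Sk := supnorm A (fun a => k' a - k a)). set (Smu := supnorm A (fun a => mu' a - mu a)).
    assert (HSk : forall x, 0 <= x <= A -> Rabs (k' x - k x) <= Sk).
    { intros x Hx. apply (supnorm_ge A (fun a => k' a - k a)); auto. apply lip_minus; auto. }
    assert (HSmu : forall x, 0 <= x <= A -> Rabs (mu' x - mu x) <= Smu).
    { intros x Hx. apply (supnorm_ge A (fun a => mu' a - mu a)); auto. apply lip_minus; auto. }
    assert (HSk0 : 0 <= Sk) by (eapply Rle_trans; [apply Rabs_pos| apply (HSk 0)]; lra).
    assert (HSmu0 : 0 <= Smu) by (eapply Rle_trans; [apply Rabs_pos| apply (HSmu 0)]; lra).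
    assert (HK0 : 0 <= K) by (destruct (Hk0 0); lra).
    set (D0 := RInt (fun a => a * kmin a * exp (- RInt mumax 0 a)) 0 A).
    set (R0 := RInt (fun a => kmin a * exp (- RInt mumax 0 a)) 0 A).
    assert (HR0' : R0 = Fz A kmin mumax 0).
    { unfold R0, Fz. apply RInt_ext_on with A. split; lra. split; lra. intros; do 2 f_equal; ring. }
    assert (Hl : 0 < ln R0) by (rewrite <- ln_1; apply ln_increasing; lra).
    assert (HP : / exp (- zmax * A) * ln R0 <= Rpower (2 * A * K) (2 * A * K - 1)).
    { replace (- zmax * A) with (- (zmax * A)) by ring. rewrite exp_Ropp, Rinv_inv.
      apply num_ineq; try lra. nra. }
    assert (HC : 0 <= Sk + K * A * Smu) by (assert (0 <= K * A * Smu) by (apply Rmult_le_pos; [apply Rmult_le_pos|]; lra); lra).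
    assert (Goal : Rabs (z' - z) <= A * Rpower (2 * A * K) (2 * A * K - 1) / (D0 * ln R0) * (Sk + K * A * Smu)).
    { destruct (Rle_dec z z') as [r|n].
      - rewrite Rabs_right by lra. apply final_alg with (exp (- zmax * A)); auto; try lra. apply exp_pos.
        apply (core A kmin mumax K k mu k' mu' z z' zmax Sk Smu); auto; try lra.
        intros x Hx; apply Hmb'; auto.
      - rewrite Rabs_left1 by lra. replace (- (z' - z)) with (z - z') by ring.
        apply final_alg with (exp (- zmax * A)); auto; try lra. apply exp_pos.
        apply (core A kmin mumax K k' mu' k mu z' z zmax Sk Smu); auto; try lra.
        intros x Hx; apply Hmb; auto.
        intros x Hx; rewrite Rabs_minus_sym; auto.
        intros x Hx; rewrite Rabs_minus_sym; auto. }
    unfold Lconst. cbv zeta. fold K. fold D0. fold R0.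
    eapply Rle_trans. apply Goal. right. ring.
Qed.
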